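(* Let $(X,d_X)$ be a complete metric space. Let $\mathfrak{A}=\{A(t)\}_{t\in\mathbb{R}}$ be the pullback attractor of a process $U$ on $X$ and $\mathcal{A}$ the global attractor of a semigroup $S$ on $X$. Suppose that (i) for every family $\{x_t\}\subset X$ and $x_0\in X$ with $\lim_{t\to-\infty}d_X(x_t,x_0)=0$, $$\lim_{t\to-\infty} d_X\big(U(t,t-T,x_t),S(T,x_0)\big)=0\quad\text{for all } T>0;$$ (ii) $\mathfrak{A}$ is backwards compact, i.e. there is a compact set $K\subset X$ with $\bigcup_{t\leq 0}A(t)\subset K$. Then $\lim_{t\to-\infty}\operatorname{dist}\big(A(t),\mathcal{A}\big)=0$.
   Context: A process on $X$ is a map $U:\{(t,\tau)\in\mathbb{R}^2:t\geq\tau\}\times X\to X$ with $U(\tau,\tau,x)=x$ and $U(t,s,U(s,\tau,x))=U(t,\tau,x)$ for all $t\geq s\geq\tau$, $x\in X$ (no continuity is assumed). A pullback attractor of $U$ is a family $\mathfrak{A}=\{A(t)\}_{t\in\mathbb{R}}$ of nonempty compact subsets of $X$ which is invariant ($U(t,\tau,A(\tau))=A(t)$ for all $t\geq\tau$), pullback attracts every nonempty bounded set $D\subset X$ (i.e. $\lim_{s\to\infty}\operatorname{dist}(U(t,t-s,D),A(t))=0$ for every $t\in\mathbb{R}$), and is minimal among families with these properties. A semigroup on $X$ is a map $S:[0,\infty)\times X\to X$ with $S(0,x)=x$ and $S(t+s,x)=S(t,S(s,x))$; its global attractor $\mathcal{A}$ is a nonempty compact set with $S(t,\mathcal{A})=\mathcal{A}$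 for all $t\geq0$ that attracts every bounded set $D$: $\lim_{t\to\infty}\operatorname{dist}(S(t,D),\mathcal{A})=0$. Here $\operatorname{dist}(A,B)=\sup_{a\in A}\inf_{b\in B}d_X(a,b)$ is the Hausdorff semi-metric. *)

(* Defs.v *)
From HB Require Import structures.
From mathcomp Require Import all_boot all_order all_algebra.
From mathcomp Require Import all_classical all_reals all_analysis.
Set Implicit Arguments. Unset Strict Implicit. Unset Printing Implicit Defensive.
Import Order.TTheory GRing.Theory Num.Theory.
Local Open Scope classical_set_scope.
Local Open Scope ring_scope.

Section MetricDefs.
Variables (R : realType) (X : Type) (d : X -> X -> R).

Definition is_metric : Prop :=
  [/\ (forall x y, 0 <= d x y),
      (forall x y, d x y = 0 <-> x = y),
      (forall x y, d x y = d y x) &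
      (forall x y z, d x z <= d x y + d y z)].

Definition m_complete : Prop :=
  forall u : nat -> X,
    (forall e : R, 0 < e -> exists N : nat, forall m n : nat,
        (N <= m)%N -> (N <= n)%N -> d (u m) (u n) < e) ->
    exists x : X, forall e : R, 0 < e -> exists N : nat, forall n : nat,
        (N <= n)%N -> d (u n) x < e.

Definition m_open (O : set X) : Prop :=
  forall x, O x -> exists2 e : R, 0 < e & [set y | d x y < e] `<=` O.

Definition m_compact (K : set X) : Prop :=
  forall (I : Type) (F : I -> set X),
    (forall i, m_open (F i)) -> K `<=` \bigcup_i F i ->
    exists (n : nat) (g : nat -> I),
      K `<=` \bigcup_(j in [set k : nat | (k < n)%N]) F (g j).

Definition m_bounded (D : set X) : Prop :=
  exists x : X, exists r : R, forall y, D y -> d x y <= r.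

Definition hdist (A B : set X) : \bar R :=
  ereal_sup [set ereal_inf [set (d a b)%:E | b in B] | a in A].

(** Processes: U t tau x, meaningful for t >= tau. *)
Definition is_process (U : R -> R -> X -> X) : Prop :=
  (forall tau x, U tau tau x = x) /\
  (forall t s tau x, tau <= s -> s <= t -> U t s (U s tau x) = U t tau x).

Definition pullback_attracts (U : R -> R -> X -> X) (C : R -> set X) : Prop :=
  forall D : set X, D !=set0 -> m_bounded D ->
    forall t : R, hdist (U t (t - s) @` D) (C t) @[s --> +oo] --> 0%E.

Definition is_invariant_family (U : R -> R -> X -> X) (C : R -> set X) : Prop :=
  forall t tau, tau <= t -> U t tau @` C tau = C t.

Definition is_pullback_attractor (U : R -> R -> X -> X) (A : R -> set X) : Prop :=
  [/\ (forall t, A t !=set0 /\ m_compact (A t)),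
      is_invariant_family U A,
      pullback_attracts U A &
      (forall C : R -> set X,
         (forall t, C t !=set0 /\ m_compact (C t)) ->
         is_invariant_family U C -> pullback_attracts U C ->
         forall t, A t `<=` C t)].

Definition is_semigroup (S : R -> X -> X) : Prop :=
  (forall x, S 0 x = x) /\
  (forall t s x, 0 <= t -> 0 <= s -> S (t + s) x = S t (S s x)).

Definition is_global_attractor (S : R -> X -> X) (A : set X) : Prop :=
  [/\ A !=set0, m_compact A,
      (forall t, 0 <= t -> S t @` A = A) &
      (forall D : set X, D !=set0 -> m_bounded D ->
         hdist (S t @` D) A @[t --> +oo] --> 0%E)].

End MetricDefs.

(* Main.v *)
Require Import Defs.
From HB Require Import structures.
From mathcomp Require Import all_boot all_order all_algebra.
From mathcomp Require Import all_classical all_reals all_analysis.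
Import Order.TTheory GRing.Theory Num.Theory.
Local Open Scope classical_set_scope.
Local Open Scope ring_scope.
Set Implicit Arguments. Unset Strict Implicit.

Lemma nat_gt (R : realType) (x : R) : exists n : nat, x < n%:R.
Proof. exists (Num.truncn x).+1; exact: truncnS_gt. Qed.

Lemma near_ninftyP (R : realType) (P : R -> Prop) :
  (\forall t \near -oo, P t) <-> exists M, forall t, t < M -> P t.
Proof.
split; first by move=> [M [_ H]]; exists M.
by move=> [M H]; exists M; split => //; exact: num_real.
Qed.

Lemma near_pinftyP (R : realType) (P : R -> Prop) :
  (\forall t \near +oo, P t) <-> exists M, forall t, M < t -> P t.
Proof.
split; first by move=> [M [_ H]]; exists M.
by move=> [M H]; exists M; split => //; exact: num_real.
Qed.

Lemma finmin (R : realType) (h : nat -> R) (N : nat) :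
  exists M, forall n, (n < N)%N -> M <= h n.
Proof.
elim: N => [|N [M HM]]; first by exists 0.
exists (Num.min M (h N)) => n; rewrite ltnS leq_eqVlt => /orP [/eqP ->|/HM].
  by rewrite ge_min lexx orbT.
by move=> H; rewrite ge_min H.
Qed.

Lemma ball_open (R : realType) (X : Type) (d : X -> X -> R) (c : X) (r : R) :
  is_metric d -> m_open d [set y | d c y < r].
Proof.
move=> [d0 deq dsym dtri] y /= Hy; exists (r - d c y); first by rewrite subr_gt0.
move=> z /= Hz; apply: (le_lt_trans (dtri c y z)).
by rewrite -ltrBrDl.
Qed.

Lemma compact_bounded (R : realType) (X : Type) (d : X -> X -> R) (K : set X) (x0 : X) :
  is_metric d -> m_compact d K -> m_bounded d K.
Proof.
move=> dm Kc.
have [n [g Hg]] := Kc nat (fun i => [set y | d x0 y < i%:R])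
  (fun i => @ball_open R X d x0 i%:R dm) (fun y _ => let: ex_intro k hk := nat_gt (d x0 y) in
     ex_intro2 _ _ k I hk).
exists x0, (\max_(j < n) g j)%:R => y /Hg [k /= kn Hk].
apply/ltW/(lt_le_trans Hk); rewrite ler_nat.
exact: (@leq_bigmax _ (fun j : 'I_n => g j) (Ordinal kn)).
Qed.

Lemma claim (R : realType) (X : Type) (d : X -> X -> R) (V : R -> X -> X) (y b : X) (c : R) :
  is_metric d -> 0 < c ->
  (forall xt : R -> X, d (xt t) b @[t --> -oo] --> 0 ->
      d (V t (xt t)) y @[t --> -oo] --> 0) ->
  exists p : R * R, 0 < p.1 /\ forall t, t < p.2 -> forall x, d x b < p.1 -> d (V t x) y < c.
Proof.
move=> [d0 deq dsym dtri] c0 Hi.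
apply: contrapT => H.
have H' : forall n : nat, exists p : R * X, [/\ p.1 < - n%:R, d p.2 b < (n.+1%:R)^-1
   & ~ (d (V p.1 p.2) y < c)].
  move=> n; apply: contrapT => Hn; apply: H; exists ((n.+1%:R)^-1, - n%:R); split => /=.
    by rewrite invr_gt0.
  move=> t tM x dx; apply: contrapT => bad; apply: Hn; by exists (t, x).
have [f Hf] := choice H'.
pose tn n := (f n).1; pose xn n := (f n).2.
pose xt t := match pselect (exists n, tn n = t) with
             | left e => xn (proj1_sig (cid e)) | right _ => b end.
have Hxt : d (xt t) b @[t --> -oo] --> 0.
  apply/cvgrPdist_lt => e e0.
  have [N HN] := nat_gt e^-1.
  have [M HM] := finmin tn N.
  apply/near_ninftyP; exists M => t tM.
  rewrite /xt; case: pselect => [ex|_]; last by rewrite (proj2 (deq b b)) // subr0 normr0.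
  case: (cid ex) => n /= tnt.
  have nN : (N <= n)%N.
    rewrite leqNgt; apply/negP => /HM; rewrite tnt => /(lt_le_trans tM); by rewrite ltxx.
  have [_ h _] := Hf n.
  rewrite sub0r normrN ger0_norm //; apply: (lt_le_trans h).
  apply: (le_trans _ (ltW (_ : N.+1%:R^-1 < e))).
    by rewrite lef_pV2 ?posrE ?ltr0n // ler_nat.
  rewrite -[e]invrK ltf_pV2 ?posrE ?invr_gt0 ?ltr0n //.
  by apply: (lt_le_trans HN); rewrite ler_nat.
have := Hi xt Hxt; move/cvgrPdist_lt => /(_ c c0) /near_ninftyP [M1 HM1].
have [n Hn] := nat_gt (- M1).
have tnM : tn n < M1.
  have [h _ _] := Hf n; apply: (lt_trans h); by rewrite ltrNl.
have := HM1 _ tnM; rewrite /xt; case: pselect => [ex|nex]; last by exfalso; apply: nex; exists n.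
case: (cid ex) => m /= tmn.
have [_ _ bad] := Hf m.
rewrite sub0r normrN ger0_norm // -tmn; by move/bad.
Qed.

Lemma extractT (R : realType) (f : R -> \bar R) (e : R) :
  f t @[t --> +oo] --> 0%E -> 0 < e -> exists2 T, 0 < T & (f T < e%:E)%E.
Proof.
move/fine_cvgP => [/near_pinftyP [M1 H1] /cvgrPdist_lt Hc] e0.
have [M2 H2] := (near_pinftyP _).1 (Hc e e0).
pose T := Num.max (Num.max M1 M2) 0 + 1.
have hT : Num.max (Num.max M1 M2) 0 < T by rewrite /T ltrDl.
have h1 : M1 < T by apply: le_lt_trans hT; rewrite !le_max lexx.
have h2 : M2 < T by apply: le_lt_trans hT; rewrite !le_max lexx orbT.
have h0 : 0 < T by apply: le_lt_trans hT; rewrite !le_max lexx orbT.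
exists T => //.
have := H2 _ h2; rewrite /= sub0r normrN => h.
rewrite -(fineK (H1 _ h1)) lte_fin; exact: (le_lt_trans (ler_norm _) h).
Qed.

Lemma hdist_cvg (R : realType) (h : R -> \bar R) :
  (forall e, 0 < e -> exists M, forall t, t < M -> (0 <= h t <= e%:E)%E) ->
  h t @[t --> -oo] --> 0%E.
Proof.
move=> H; apply/fine_cvgP; split.
  apply/near_ninftyP; have [M HM] := H 1 ltr01; exists M => t /HM /andP [a b].
  by rewrite ge0_fin_numE // (le_lt_trans b) // ltry.
apply/cvgrPdist_lt => e e0; apply/near_ninftyP.
have [M HM] := H (e / 2) (divr_gt0 e0 (ltr0Sn _ 1)); exists M => t /HM /andP [a b] /=.
rewrite sub0r normrN; move: a b; case: (h t) => [r| |] //=.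
rewrite !lee_fin => a b; rewrite ger0_norm //; apply: (le_lt_trans b).
by rewrite ltr_pdivrMr // ltr_pMr // ltr1n.
Qed.

Unset Implicit Arguments. Set Strict Implicit.

Theorem theorem2p3 (R : realType) (X : Type) (d : X -> X -> R)
  (U : R -> R -> X -> X) (S : R -> X -> X)
  (A : R -> set X) (Aglob : set X) :
  is_metric d -> m_complete d ->
  is_process U -> is_pullback_attractor d U A ->
  is_semigroup S -> is_global_attractor d S Aglob ->
  (forall (xt : R -> X) (x0 : X),
     d (xt t) x0 @[t --> -oo] --> 0 ->
     forall T : R, 0 < T ->
       d (U t (t - T) (xt t)) (S T x0) @[t --> -oo] --> 0) ->
  (exists K : set X, m_compact d K /\ forall t : R, t <= 0 -> A t `<=` K) ->
  hdist d (A t) Aglob @[t --> -oo] --> 0%E.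
Proof.
move=> dm _ _ [Ane Ainv _ _] _ [Gne _ _ Gatt] Hi [K [Kc AK]].
have dm' := dm; case: dm' => [d0 deq dsym dtri].
have [a0 Aa0] := (Ane 0).1.
have Ka0 : K a0 by apply: (AK 0).
have Kb : m_bounded d K by exact: (compact_bounded a0 dm Kc).
apply: hdist_cvg => eps eps0.
have e20 : 0 < eps / 2 by rewrite divr_gt0 // ltr0Sn.
have [T T0 HT] := extractT (Gatt K (ex_intro _ a0 Ka0) Kb) e20.
have Hz : forall b, K b -> exists2 z, Aglob z & d (S T b) z < eps / 2.
  move=> b Kb'.
  have : (ereal_inf [set (d (S T b) z)%:E | z in Aglob] < (eps / 2)%:E)%E.
    apply: le_lt_trans HT; apply: ereal_sup_ubound; exists (S T b) => //.
  by move/ereal_inf_lt => [_ [z Gz <-]]; rewrite lte_fin => h; exists z.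
have Hc : forall b, exists p : R * R, 0 < p.1 /\ forall t, t < p.2 -> forall x,
    d x b < p.1 -> d (U t (t - T) x) (S T b) < eps / 2.
  move=> b; apply: (claim (V := fun t x => U t (t - T) x)) => // xt Hxt.
  exact: Hi.
have [fb Hfb] := choice Hc.
have Hcov : K `<=` \bigcup_(i in [set: {b : X | K b}]) [set x | d (sval i) x < (fb (sval i)).1].
  move=> x Kx; exists (exist _ x Kx) => //=.
  rewrite (proj2 (deq x x)) //; exact: (proj1 (Hfb x)).
have [n [g Hg]] := Kc {b : X | K b} (fun i => [set x | d (sval i) x < (fb (sval i)).1])
   (fun i => @ball_open R X d (sval i) (fb (sval i)).1 dm) Hcov.
have [M0 HM0] := finmin (fun j => (fb (sval (g j))).2) n.
exists (Num.min M0 0) => t; rewrite lt_min => /andP [tM0 t0].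
have [a Aa] := (Ane t).1.
apply/andP; split.
  apply: (le_trans _ (ereal_sup_ubound (ex_intro2 _ _ a Aa erefl))).
  apply: le_ereal_inf_tmp => _ [z _ <-]; by rewrite lee_fin.
apply: ge_ereal_sup => _ [a' Aa' <-].
have tT : t - T <= t by rewrite lerBlDr lerDl ltW.
move: Aa'; rewrite -(Ainv t (t - T) tT) => -[x Ax <-].
have Kx : K x by apply: (AK (t - T)) => //; rewrite lerBlDr add0r ltW // (lt_trans t0).
have [j /= jn Hj] := Hg x Kx.
set b := sval (g j).
have Kb' : K b by exact: (svalP (g j)).
have [z Gz dz] := Hz b Kb'.
have [_ Hb] := Hfb b.
have dxb : d x b < (fb b).1 by rewrite dsym.
have h1 := Hb t (lt_le_trans tM0 (HM0 j jn)) x dxb.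
apply: le_trans (ereal_inf_lbound (ex_intro2 _ _ z Gz erefl)) _.
rewrite lee_fin; apply: (le_trans (dtri _ (S T b) _)); apply: ltW.
by rewrite [eps]splitr ltrD.
Qed.
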